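(* Let $\rho:E\to B$ be a stream covering. (1) $E$ is path-ordered if and only if $B$ is path-ordered. (2) For each $e\in E$, every homotopy through dipaths on $B$ starting at $\rho(e)$ (i.e. a continuous $H:[0,1]\times[0,1]\to B$ such that each $H(s,-)$ is a dipath, with $H(0,0)=\rho(e)$) lifts under $\rho$ to a unique homotopy through dipaths $\tilde H$ on $E$ with $\rho\circ\tilde H=H$ and $\tilde H(0,0)=e$; likewise for homotopies ending at $\rho(e)$ (with $(0,0)$ replaced by $(0,1)$).
   Context: Streams: a circulation on a space $X$ assigns to each open $V\subset X$ a preorder $\leqslant_V$ such that for every collection $\mathcal{O}$ of open sets, $\leqslant_{\bigcup\mathcal{O}}$ is the preorder with smallest graph containing $\bigcup_{V\in\mathcal{O}}\mathrm{graph}(\leqslant_V)$; a stream is a space with a circulation; a stream map $f:X\to Y$ is continuous with $f(x)\leqslant_V f(y)$ whenever $x\leqslant_{f^{-1}V}y$. An open substream of $X$ is an open $V$ with circulation $W\mapsto\leqslant_W$. A stream covering is a surjective stream map $\rho:E\to B$ such that $B$ is covered by open substreams whose preimages are disjoint unions of open substreams each mapped by $\rho$ isomorphically (as streams) onto the corresponding open substream. $\vec\square[1]$ is $[0,1]$ with circulation $x\leqslant_V y$ iff $x\le y$ and $[x,y]\subset V$; a dipath on $X$ is a stream map $\vec\square[1]\to X$. $X$ is path-ordered if whenever $V\subset X$ is open and $x\leqslant_V y$ there is a dipath from $x$ to $y$ with image in $V$. *)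

(* Defs.v *)
From Stdlib Require Import Reals.
Open Scope R_scope.
Set Implicit Arguments.

Record PreStream := {
  pt : Type;
  opn : (pt -> Prop) -> Prop;
  circ : (pt -> Prop) -> pt -> pt -> Prop
}.

Definition bigunion {X : Type} (O : (X -> Prop) -> Prop) : X -> Prop :=
  fun x => exists U, O U /\ U x.

Definition is_topology (X : PreStream) : Prop :=
  opn X (fun _ => True) /\
  (forall O : (pt X -> Prop) -> Prop,
      (forall U, O U -> opn X U) -> opn X (bigunion O)) /\
  (forall U V, opn X U -> opn X V -> opn X (fun x => U x /\ V x)).

Definition preorder_on {X : Type} (V : X -> Prop) (R : X -> X -> Prop) : Prop :=
  (forall x y, R x y -> V x /\ V y) /\
  (forall x, V x -> R x x) /\
  (forall x y z, R x y -> R y z -> R x z).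

Definition is_circulation (X : PreStream) : Prop :=
  (forall V, opn X V -> preorder_on V (circ X V)) /\
  (forall O : (pt X -> Prop) -> Prop, (forall U, O U -> opn X U) ->
     (forall U, O U -> forall x y, circ X U x y -> circ X (bigunion O) x y) /\
     (forall R, preorder_on (bigunion O) R ->
        (forall U, O U -> forall x y, circ X U x y -> R x y) ->
        forall x y, circ X (bigunion O) x y -> R x y)).

Definition is_stream (X : PreStream) : Prop := is_topology X /\ is_circulation X.

Definition continuous (X Y : PreStream) (f : pt X -> pt Y) : Prop :=
  forall V, opn Y V -> opn X (fun x => V (f x)).

Definition stream_map (X Y : PreStream) (f : pt X -> pt Y) : Prop :=
  continuous X Y f /\
  forall V, opn Y V -> forall x y,
    circ X (fun z => V (f z)) x y -> circ Y V (f x) (f y).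

Definition stream_iso (X Y : PreStream) (f : pt X -> pt Y) : Prop :=
  exists g : pt Y -> pt X,
    (forall x, g (f x) = x) /\ (forall y, f (g y) = y) /\
    stream_map X Y f /\ stream_map Y X g.

Definition sub (X : PreStream) (V : pt X -> Prop) : PreStream := {|
  pt := {x : pt X | V x};
  opn := fun W' => exists W, opn X W /\ forall z, W' z <-> W (proj1_sig z);
  circ := fun W' a b =>
    circ X (fun x => exists h : V x, W' (exist _ x h)) (proj1_sig a) (proj1_sig b)
|}.

Definition stream_covering (E B : PreStream) (rho : pt E -> pt B) : Prop :=
  stream_map E B rho /\
  (forall b, exists e, rho e = b) /\
  forall b, exists V, opn B V /\ V b /\
    exists F : (pt E -> Prop) -> Prop,
      (forall U, F U -> opn E U) /\
      (forall e, V (rho e) <-> bigunion F e) /\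
      (forall U1 U2, F U1 -> F U2 -> forall e, U1 e -> U2 e ->
         forall e', U1 e' <-> U2 e') /\
      (forall U, F U -> exists phi : pt (sub E U) -> pt (sub B V),
         (forall u, proj1_sig (phi u) = rho (proj1_sig u)) /\
         stream_iso (sub E U) (sub B V) phi).

Definition I : Type := {t : R | 0 <= t <= 1}.
Definition I0 : I := exist _ 0 (conj (Rle_refl 0) Rle_0_1).
Definition I1 : I := exist _ 1 (conj Rle_0_1 (Rle_refl 1)).

Definition I_open (W : I -> Prop) : Prop :=
  forall t, W t -> exists eps, eps > 0 /\
    forall s : I, Rabs (proj1_sig s - proj1_sig t) < eps -> W s.

Definition vec_I : PreStream := {|
  pt := I;
  opn := I_open;
  circ := fun V x y => proj1_sig x <= proj1_sig y /\
            forall t : I, proj1_sig x <= proj1_sig t <= proj1_sig y -> V t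
|}.

Definition dipath (X : PreStream) (g : I -> pt X) : Prop := stream_map vec_I X g.

Definition path_ordered (X : PreStream) : Prop :=
  forall V, opn X V -> forall x y, circ X V x y ->
    exists g : I -> pt X, dipath X g /\ g I0 = x /\ g I1 = y /\
      forall t, V (g t).

Definition sq_open (W : I * I -> Prop) : Prop :=
  forall p, W p -> exists eps, eps > 0 /\
    forall q : I * I,
      Rabs (proj1_sig (fst q) - proj1_sig (fst p)) < eps ->
      Rabs (proj1_sig (snd q) - proj1_sig (snd p)) < eps -> W q.

Definition dihomotopy (X : PreStream) (H : I * I -> pt X) : Prop :=
  (forall V, opn X V -> sq_open (fun p => V (H p))) /\
  (forall s, dipath X (fun t => H (s, t))).

(* Main.v *)
Require Import Defs.
From Stdlib Require Import Reals Lra ClassicalEpsilon FunctionalExtensionality PropExtensionality ProofIrrelevance Classical.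
Open Scope R_scope.

Lemma pe_ext {X : Type} (P Q : X -> Prop) : (forall x, P x <-> Q x) -> P = Q.
Proof. intros H; apply functional_extensionality; intros x; apply propositional_extensionality; apply H. Qed.

Lemma sig_eq {X : Type} (P : X -> Prop) (a b : {x | P x}) : proj1_sig a = proj1_sig b -> a = b.
Proof. destruct a as [a ha], b as [b hb]; simpl; intros ->; f_equal; apply proof_irrelevance. Qed.

Lemma I_eq (s t : I) : proj1_sig s = proj1_sig t -> s = t.
Proof. apply sig_eq. Qed.

Lemma I_bnd (t : I) : 0 <= proj1_sig t <= 1.
Proof. exact (proj2_sig t). Qed.

Lemma conn (a b : R) (P : R -> Prop) : a <= b -> P a ->
  (forall u, a <= u <= b -> P u -> exists eps, eps > 0 /\ forall v, a <= v <= b -> Rabs (v - u) < eps -> P v) ->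
  (forall u, a <= u <= b -> ~ P u -> exists eps, eps > 0 /\ forall v, a <= v <= b -> Rabs (v - u) < eps -> ~ P v) ->
  forall u, a <= u <= b -> P u.
Proof.
  intros hab Pa Hop Hcl.
  set (S := fun x => a <= x <= b /\ forall w, a <= w <= x -> P w).
  assert (Sa : S a). { split; [lra|]. intros w hw. replace w with a by lra. exact Pa. }
  assert (Sb : bound S). { exists b. intros x [hx _]; lra. }
  destruct (completeness S Sb (ex_intro _ a Sa)) as [c [cub cl]].
  assert (hac : a <= c) by (apply cub; exact Sa).
  assert (hcb : c <= b) by (apply cl; intros x [hx _]; lra).
  assert (below : forall w, a <= w < c -> P w).
  { intros w hw. destruct (classic (exists x, S x /\ w <= x)) as [[x [[hx1 hx2] hwx]]|hn].
    - apply hx2; lra.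
    - exfalso. assert (c <= w). { apply cl. intros x hx. destruct (Rle_dec x w); [lra|]. exfalso; apply hn; exists x; split; [auto|lra]. } lra. }
  assert (Pc : P c).
  { destruct (classic (P c)) as [h|h]; [exact h|].
    destruct (Hcl c ltac:(lra) h) as [eps [heps Heps]].
    exfalso. destruct (Rle_dec c a) as [hca|hca].
    - assert (c = a) by lra. subst c. contradiction.
    - set (w := Rmax a (c - eps/2)).
      apply (Heps w); [unfold w; split; [apply Rmax_l|]; apply Rmax_lub; lra| |].
      + unfold w; unfold Rmax; destruct (Rle_dec a (c - eps/2)); apply Rabs_def1; lra.
      + apply below; unfold w; split; [apply Rmax_l|]; apply Rmax_lub_lt; lra. }
  assert (upto : forall w, a <= w <= c -> P w).
  { intros w hw. destruct (Req_dec w c) as [->|hne]; [exact Pc|]. apply below; lra. }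
  assert (hc : c = b).
  { destruct (Req_dec c b) as [|hne]; [auto|]. exfalso.
    destruct (Hop c ltac:(lra) Pc) as [eps [heps Heps]].
    set (x := Rmin b (c + eps/2)).
    assert (Sx : S x).
    { split; [unfold x; split; [apply Rmin_glb; lra|apply Rmin_l]|].
      intros w hw. destruct (Rle_dec w c); [apply upto; lra|].
      apply Heps; [unfold x in hw; split; [lra|]; pose proof (Rmin_l b (c+eps/2)); lra|].
      pose proof (Rmin_r b (c+eps/2)). unfold x in hw. apply Rabs_def1; lra. }
    pose proof (cub x Sx). unfold x in H. unfold Rmin in H; destruct (Rle_dec b (c+eps/2)); lra. }
  subst c. intros u hu. apply upto. exact hu.
Qed.

Definition clamp (a b r : R) : R := Rmax a (Rmin r b).

Lemma clamp_bnd a b r : a <= b -> a <= clamp a b r <= b.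
Proof. intros; unfold clamp, Rmax, Rmin; repeat destruct Rle_dec; lra. Qed.

Lemma clamp_id a b r : a <= r <= b -> clamp a b r = r.
Proof. intros; unfold clamp, Rmax, Rmin; repeat destruct Rle_dec; lra. Qed.

Lemma clamp_lip a b r r' : a <= b -> Rabs (clamp a b r - clamp a b r') <= Rabs (r - r').
Proof. intros; unfold clamp, Rmax, Rmin; repeat destruct Rle_dec; unfold Rabs; repeat destruct Rcase_abs; lra. Qed.

Definition mkI (r : R) : I := exist _ (clamp 0 1 r) (clamp_bnd 0 1 r Rle_0_1).

Lemma mkI_val r : 0 <= r <= 1 -> proj1_sig (mkI r) = r.
Proof. intros; simpl; apply clamp_id; auto. Qed.

Lemma mkI_proj (t : I) : mkI (proj1_sig t) = t.
Proof. apply I_eq. apply mkI_val. apply I_bnd. Qed.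

Lemma mkI_lip r r' : Rabs (proj1_sig (mkI r) - proj1_sig (mkI r')) <= Rabs (r - r').
Proof. simpl; apply clamp_lip; lra. Qed.

Lemma conn_I (a b : R) (P : I -> Prop) : 0 <= a <= b -> b <= 1 ->
  (forall t, proj1_sig t = a -> P t) ->
  (forall u, a <= proj1_sig u <= b -> P u -> exists eps, eps > 0 /\ forall v, a <= proj1_sig v <= b -> Rabs (proj1_sig v - proj1_sig u) < eps -> P v) ->
  (forall u, a <= proj1_sig u <= b -> ~ P u -> exists eps, eps > 0 /\ forall v, a <= proj1_sig v <= b -> Rabs (proj1_sig v - proj1_sig u) < eps -> ~ P v) ->
  forall u, a <= proj1_sig u <= b -> P u.
Proof.
  intros ha hb P0 Hop Hcl.
  assert (H : forall r, a <= r <= b -> P (mkI r)).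
  { apply (conn a b (fun r => P (mkI r))); [lra| apply P0; apply mkI_val; lra | |].
    - intros u hu Pu. destruct (Hop (mkI u)) as [eps [he Heps]]; [rewrite mkI_val; lra|auto|].
      exists eps; split; auto. intros v hv hvu. apply Heps; rewrite ?mkI_val; lra.
    - intros u hu Pu. destruct (Hcl (mkI u)) as [eps [he Heps]]; [rewrite mkI_val; lra|auto|].
      exists eps; split; auto. intros v hv hvu. apply Heps; rewrite ?mkI_val; lra. }
  intros u hu. rewrite <- (mkI_proj u). apply H. auto.
Qed.

Definition cont_at (X : PreStream) (f : I -> pt X) (t : I) : Prop :=
  forall W, opn X W -> W (f t) -> exists eps, eps > 0 /\
    forall u : I, Rabs (proj1_sig u - proj1_sig t) < eps -> W (f u).

Lemma cont_iff X f : continuous vec_I X f <-> forall t, cont_at X f t.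
Proof.
  unfold continuous, cont_at; simpl; unfold I_open; split.
  - intros H t W hW hWt. exact (H W hW t hWt).
  - intros H W hW t hWt. exact (H t W hW hWt).
Qed.

Definition cont2 (X : PreStream) (H : I * I -> pt X) (p : I * I) : Prop :=
  forall W, opn X W -> W (H p) -> exists eps, eps > 0 /\
    forall q : I * I,
      Rabs (proj1_sig (fst q) - proj1_sig (fst p)) < eps ->
      Rabs (proj1_sig (snd q) - proj1_sig (snd p)) < eps -> W (H q).

Definition sqcont (X : PreStream) (H : I * I -> pt X) : Prop :=
  forall W, opn X W -> sq_open (fun p => W (H p)).

Lemma sqcont_iff X H : sqcont X H <-> forall p, cont2 X H p.
Proof.
  unfold sqcont, cont2, sq_open; split.
  - intros Hc p W hW hWp. exact (Hc W hW p hWp).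
  - intros Hc W hW p hWp. exact (Hc p W hW hWp).
Qed.

Lemma comp_II X (f : I -> pt X) (g : I -> I) K u : K > 0 ->
  (forall u', Rabs (proj1_sig (g u') - proj1_sig (g u)) <= K * Rabs (proj1_sig u' - proj1_sig u)) ->
  cont_at X f (g u) -> cont_at X (fun t => f (g t)) u.
Proof.
  intros hK hg hf W hW hWu. destruct (hf W hW hWu) as [eps [he Heps]].
  exists (eps / K); split; [apply Rdiv_lt_0_compat; lra|].
  intros u' hu'. apply Heps. specialize (hg u').
  apply Rle_lt_trans with (1 := hg).
  apply (Rmult_lt_compat_l K) in hu'; [|lra]. field_simplify in hu'; lra.
Qed.

Lemma comp_Isq X (H : I * I -> pt X) (g : I -> I * I) K u : K > 0 ->
  (forall u', Rabs (proj1_sig (fst (g u')) - proj1_sig (fst (g u))) <= K * Rabs (proj1_sig u' - proj1_sig u)) ->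
  (forall u', Rabs (proj1_sig (snd (g u')) - proj1_sig (snd (g u))) <= K * Rabs (proj1_sig u' - proj1_sig u)) ->
  cont2 X H (g u) -> cont_at X (fun t => H (g t)) u.
Proof.
  intros hK hg1 hg2 hf W hW hWu. destruct (hf W hW hWu) as [eps [he Heps]].
  exists (eps / K); split; [apply Rdiv_lt_0_compat; lra|].
  intros u' hu'. apply (Rmult_lt_compat_l K) in hu'; [|lra]. field_simplify in hu'; [|lra].
  apply Heps; [specialize (hg1 u')|specialize (hg2 u')]; lra.
Qed.

Lemma comp_sqsq X (H : I * I -> pt X) (g : I * I -> I * I) p :
  (forall q eps, Rabs (proj1_sig (fst q) - proj1_sig (fst p)) < eps ->
      Rabs (proj1_sig (snd q) - proj1_sig (snd p)) < eps ->
      Rabs (proj1_sig (fst (g q)) - proj1_sig (fst (g p))) < eps /\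
      Rabs (proj1_sig (snd (g q)) - proj1_sig (snd (g p))) < eps) ->
  cont2 X H (g p) -> cont2 X (fun q => H (g q)) p.
Proof.
  intros hg hf W hW hWu. destruct (hf W hW hWu) as [eps [he Heps]].
  exists eps; split; auto. intros q h1 h2. destruct (hg q eps h1 h2). apply Heps; auto.
Qed.

Lemma slice_cont X (H : I * I -> pt X) s t : cont2 X H (s, t) -> cont_at X (fun u => H (s, u)) t.
Proof.
  intros h. apply (comp_Isq X H (fun u => (s, u)) 1 t); simpl; try lra.
  - intros; rewrite Rminus_diag, Rabs_R0; pose proof (Rabs_pos (proj1_sig u' - proj1_sig t)); lra.
  - intros; lra.
  - exact h.
Qed.

Definition pw {Y : Type} (c : R) (f h : I -> Y) (t : I) : Y :=
  if Rle_dec (proj1_sig t) c then f t else h t.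

Lemma pw_cont X c (f h : I -> pt X) t :
  (proj1_sig t <= c -> cont_at X f t) -> (c <= proj1_sig t -> cont_at X h t) ->
  (proj1_sig t = c -> f t = h t) -> cont_at X (pw c f h) t.
Proof.
  intros hf hh he W hW hWt. unfold pw in *.
  destruct (Rtotal_order (proj1_sig t) c) as [hlt|[heq|hgt]].
  - destruct (Rle_dec (proj1_sig t) c); [|lra].
    destruct (hf ltac:(lra) W hW hWt) as [eps [he' Heps]].
    exists (Rmin eps (c - proj1_sig t)); split; [apply Rmin_glb_lt; lra|].
    intros u hu. pose proof (Rmin_l eps (c - proj1_sig t)); pose proof (Rmin_r eps (c - proj1_sig t)).
    destruct (Rle_dec (proj1_sig u) c); [apply Heps; lra|]. exfalso. apply Rabs_def2 in hu. lra.
  - destruct (Rle_dec (proj1_sig t) c); [|lra].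
    destruct (hf ltac:(lra) W hW hWt) as [eps [he' Heps]].
    rewrite (he heq) in hWt. destruct (hh ltac:(lra) W hW hWt) as [eps2 [he2 Heps2]].
    exists (Rmin eps eps2); split; [apply Rmin_glb_lt; lra|].
    intros u hu. pose proof (Rmin_l eps eps2); pose proof (Rmin_r eps eps2).
    destruct (Rle_dec (proj1_sig u) c); [apply Heps; lra|apply Heps2; lra].
  - destruct (Rle_dec (proj1_sig t) c); [lra|].
    destruct (hh ltac:(lra) W hW hWt) as [eps [he' Heps]].
    exists (Rmin eps (proj1_sig t - c)); split; [apply Rmin_glb_lt; lra|].
    intros u hu. pose proof (Rmin_l eps (proj1_sig t - c)); pose proof (Rmin_r eps (proj1_sig t - c)).
    destruct (Rle_dec (proj1_sig u) c); [|apply Heps; lra]. exfalso. apply Rabs_def2 in hu. lra.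
Qed.

Lemma const_cont X (x : pt X) t : cont_at X (fun _ => x) t.
Proof. intros W hW hx. exists 1; split; [lra|]. auto. Qed.

Section S.
Variable X : PreStream.
Hypothesis HX : is_stream X.

Lemma opn_inter U V : opn X U -> opn X V -> opn X (fun x => U x /\ V x).
Proof. destruct HX as [[_ [_ h]] _]. apply h. Qed.

Lemma circ_pre V : opn X V -> preorder_on V (circ X V).
Proof. destruct HX as [_ [h _]]. apply h. Qed.

Lemma circ_dom V x y : opn X V -> circ X V x y -> V x /\ V y.
Proof. intros hV h. exact (proj1 (circ_pre V hV) x y h). Qed.

Lemma circ_refl V x : opn X V -> V x -> circ X V x x.
Proof. intros hV h. exact (proj1 (proj2 (circ_pre V hV)) x h). Qed.

Lemma circ_trans V x y z : opn X V -> circ X V x y -> circ X V y z -> circ X V x z.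
Proof. intros hV. apply (proj2 (proj2 (circ_pre V hV))). Qed.

Lemma circ_mono U V x y : opn X U -> opn X V -> (forall z, U z -> V z) -> circ X U x y -> circ X V x y.
Proof.
  intros hU hV hUV h.
  destruct HX as [_ [_ hun]].
  set (O := fun W => W = U \/ W = V).
  assert (hO : forall W, O W -> opn X W) by (intros W [->| ->]; auto).
  assert (e : bigunion O = V).
  { apply pe_ext; intros z; unfold bigunion, O; split.
    - intros [W [[->| ->] hz]]; auto.
    - intros hz; exists V; auto. }
  destruct (hun O hO) as [h1 _]. rewrite <- e. apply (h1 U); auto. left; auto.
Qed.

Lemma circ_gen V (R0 : pt X -> pt X -> Prop) : opn X V -> preorder_on V R0 ->
  (forall x, V x -> exists W, opn X W /\ W x /\ (forall y, W y -> V y) /\ forall a b, circ X W a b -> R0 a b) ->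
  forall a b, circ X V a b -> R0 a b.
Proof.
  intros hV hR hloc.
  destruct HX as [_ [_ hun]].
  set (O := fun W => opn X W /\ (forall y, W y -> V y) /\ forall a b, circ X W a b -> R0 a b).
  assert (hO : forall W, O W -> opn X W) by (intros W [h _]; auto).
  assert (e : bigunion O = V).
  { apply pe_ext; intros z; unfold bigunion, O; split.
    - intros [W [[_ [h _]] hz]]; auto.
    - intros hz. destruct (hloc z hz) as [W [h1 [h2 [h3 h4]]]]. exists W; split; [split; [|split]|]; auto. }
  destruct (hun O hO) as [_ h2]. rewrite <- e. apply h2.
  - rewrite e; auto.
  - intros U [_ [_ h]]; auto.
Qed.
End S.

Lemma stream_map_comp X Y Z (f : pt X -> pt Y) (g : pt Y -> pt Z) :
  stream_map X Y f -> stream_map Y Z g -> stream_map X Z (fun x => g (f x)).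
Proof.
  intros [cf df] [cg dg]. split.
  - intros V hV. apply (cf (fun y => V (g y))). apply cg; auto.
  - intros V hV x y h. apply dg; [exact hV|]. apply (df (fun y => V (g y))); [apply cg; exact hV|exact h].
Qed.

Lemma const_dipath X (x : pt X) : is_stream X -> dipath X (fun _ => x).
Proof.
  intros HX. split.
  - apply cont_iff. intros t; apply const_cont.
  - intros V hV t1 t2 [h1 h2]. apply circ_refl; auto. apply (h2 t1); lra.
Qed.

Definition concat {Y : Type} (g1 g2 : I -> Y) : I -> Y :=
  pw (1/2) (fun t => g1 (mkI (2 * proj1_sig t))) (fun t => g2 (mkI (2 * proj1_sig t - 1))).

Lemma concat_0 {Y} (g1 g2 : I -> Y) : concat g1 g2 I0 = g1 I0.
Proof. unfold concat, pw; simpl. destruct Rle_dec; [|lra]. f_equal. apply I_eq. rewrite mkI_val; simpl; lra. Qed.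

Lemma concat_1 {Y} (g1 g2 : I -> Y) : concat g1 g2 I1 = g2 I1.
Proof. unfold concat, pw; simpl. destruct Rle_dec; [lra|]. f_equal. apply I_eq. rewrite mkI_val; simpl; lra. Qed.

Lemma concat_in {Y} (P : Y -> Prop) (g1 g2 : I -> Y) : (forall t, P (g1 t)) -> (forall t, P (g2 t)) -> forall t, P (concat g1 g2 t).
Proof. intros; unfold concat, pw; destruct Rle_dec; auto. Qed.

Lemma concat_dipath X (g1 g2 : I -> pt X) : is_stream X -> dipath X g1 -> dipath X g2 -> g1 I1 = g2 I0 ->
  dipath X (concat g1 g2).
Proof.
  intros HX [c1 d1] [c2 d2] e12. rewrite cont_iff in c1, c2. split.
  - apply cont_iff. intros t. apply pw_cont.
    + intros _. apply (comp_II X g1 (fun t => mkI (2 * proj1_sig t)) 2); [lra| |apply c1].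
      intros u'. eapply Rle_trans; [apply mkI_lip|]. replace (2 * proj1_sig u' - 2 * proj1_sig t) with (2 * (proj1_sig u' - proj1_sig t)) by ring.
      rewrite Rabs_mult, (Rabs_right 2); lra.
    + intros _. apply (comp_II X g2 (fun t => mkI (2 * proj1_sig t - 1)) 2); [lra| |apply c2].
      intros u'. eapply Rle_trans; [apply mkI_lip|]. replace (2 * proj1_sig u' - 1 - (2 * proj1_sig t - 1)) with (2 * (proj1_sig u' - proj1_sig t)) by ring.
      rewrite Rabs_mult, (Rabs_right 2); lra.
    + intros h. rewrite h. replace (mkI (2 * (1/2))) with I1 by (apply I_eq; rewrite mkI_val; simpl; lra).
      replace (mkI (2 * (1/2) - 1)) with I0 by (apply I_eq; rewrite mkI_val; simpl; lra). exact e12.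
  - intros W hW t1 t2 [h12 hin]. simpl in h12, hin.
    assert (A : forall a b, proj1_sig t1 <= a -> a <= b -> b <= 1/2 -> b <= proj1_sig t2 ->
               circ X W (g1 (mkI (2*a))) (g1 (mkI (2*b)))).
    { intros a b ha hab hb hb2. pose proof (I_bnd t1). apply d1; auto. split; [rewrite !mkI_val by lra; lra|].
      intros t ht. rewrite !mkI_val in ht by lra.
      specialize (hin (mkI (proj1_sig t / 2))). rewrite mkI_val in hin by lra.
      specialize (hin ltac:(lra)). unfold concat, pw in hin. rewrite mkI_val in hin by lra.
      destruct Rle_dec; [|lra]. replace (mkI (2 * (proj1_sig t / 2))) with t in hin; auto.
      apply I_eq; rewrite mkI_val; [field|]. pose proof (I_bnd t); lra. }
    assert (Bq : forall a b, proj1_sig t1 <= a -> a <= b -> 1/2 <= a -> b <= proj1_sig t2 ->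
               circ X W (g2 (mkI (2*a-1))) (g2 (mkI (2*b-1)))).
    { intros a b ha hab hb hb2. pose proof (I_bnd t2). apply d2; auto. split; [rewrite !mkI_val by lra; lra|].
      intros t ht. rewrite !mkI_val in ht by lra.
      specialize (hin (mkI ((proj1_sig t + 1) / 2))). rewrite mkI_val in hin by lra.
      specialize (hin ltac:(lra)). unfold concat, pw in hin. rewrite mkI_val in hin by lra.
      destruct Rle_dec.
      - assert (proj1_sig t = 0) by lra. replace (mkI (2 * ((proj1_sig t + 1) / 2))) with I1 in hin.
        + rewrite e12 in hin. replace t with I0; auto. apply I_eq; simpl; lra.
        + apply I_eq; rewrite mkI_val; simpl; lra.
      - replace (mkI (2 * ((proj1_sig t + 1) / 2) - 1)) with t in hin; auto.
        apply I_eq; rewrite mkI_val; [field|]. pose proof (I_bnd t); lra. }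
    unfold concat, pw. pose proof (I_bnd t1); pose proof (I_bnd t2).
    destruct (Rle_dec (proj1_sig t1) (1/2)); destruct (Rle_dec (proj1_sig t2) (1/2)).
    + apply A; lra.
    + apply circ_trans with (g1 (mkI (2 * (1/2)))); auto; [apply A; lra|].
      replace (g1 (mkI (2 * (1/2)))) with (g2 (mkI (2 * (1/2) - 1))).
      * apply Bq; lra.
      * replace (mkI (2 * (1/2))) with I1 by (apply I_eq; rewrite mkI_val; simpl; lra).
        replace (mkI (2 * (1/2) - 1)) with I0 by (apply I_eq; rewrite mkI_val; simpl; lra). auto.
    + lra.
    + apply Bq; lra.
Qed.

Section Cov.
Variables (E B : PreStream) (rho : pt E -> pt B).
Hypotheses (HE : is_stream E) (HB : is_stream B) (cov : stream_covering E B rho).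

Definition SheetProps (V : pt B -> Prop) (U : pt E -> Prop) (sg : pt B -> pt E) : Prop :=
 (forall x, V x -> U (sg x) /\ rho (sg x) = x) /\
 (forall e, U e -> V (rho e) /\ sg (rho e) = e) /\
 (forall W, opn E W -> opn B (fun x => V x /\ W (sg x))) /\
 (forall W O, opn E W -> opn B O -> (forall x, O x -> V x /\ W (sg x)) ->
    forall x y, circ B O x y -> circ E W (sg x) (sg y)) /\
 (forall W, opn E W -> (forall e, W e -> U e) -> forall e1 e2, circ E W e1 e2 ->
    circ B (fun x => V x /\ W (sg x)) (rho e1) (rho e2)).

Lemma sheet_sigma V U (b : pt B) (phi : pt (sub E U) -> pt (sub B V)) :
  opn B V -> V b -> opn E U ->
  (forall u, proj1_sig (phi u) = rho (proj1_sig u)) -> stream_iso (sub E U) (sub B V) phi ->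
  exists sg, SheetProps V U sg.
Proof.
  intros hV hb hU hphi [g [gphi [phig [[cphi dphi] [cg dg]]]]].
  set (sg := fun x => match excluded_middle_informative (V x) with
                      | left h => proj1_sig (g (exist _ x h))
                      | right _ => proj1_sig (g (exist _ b hb)) end).
  assert (sgE : forall x (h : V x), sg x = proj1_sig (g (exist _ x h))).
  { intros x h. unfold sg. destruct excluded_middle_informative as [h'|h']; [|contradiction].
    do 3 f_equal. apply proof_irrelevance. }
  assert (S1 : forall x, V x -> U (sg x) /\ rho (sg x) = x).
  { intros x h. rewrite (sgE x h). split; [apply proj2_sig|].
    rewrite <- hphi, phig. reflexivity. }
  assert (S2 : forall e, U e -> V (rho e) /\ sg (rho e) = e).
  { intros e h. assert (hv : V (rho e)). { pose proof (proj2_sig (phi (exist _ e h))) as hp; rewrite hphi in hp; exact hp. }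
    split; auto. rewrite (sgE _ hv).
    replace (exist (fun x => V x) (rho e) hv) with (phi (exist _ e h)).
    - rewrite gphi. reflexivity.
    - apply sig_eq. simpl. apply hphi. }
  assert (S3 : forall W, opn E W -> opn B (fun x => V x /\ W (sg x))).
  { intros W hW. destruct (cg (fun z => W (proj1_sig z))) as [W0 [hW0 eW0]].
    { exists W; split; auto. tauto. }
    replace (fun x => V x /\ W (sg x)) with (fun x => V x /\ W0 x).
    - apply opn_inter; auto.
    - apply pe_ext. intros x. split; intros [hx hw]; split; auto.
      + rewrite (sgE x hx). apply (eW0 (exist _ x hx)). exact hw.
      + rewrite (sgE x hx) in hw. apply (eW0 (exist _ x hx)). exact hw. }
  exists sg. split; [exact S1|split; [exact S2|split; [exact S3|split]]].
  - intros W O hW hO hOW x y hxy.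
    destruct (circ_dom B HB O x y hO hxy) as [hx hy].
    destruct (hOW x hx) as [hvx _]. destruct (hOW y hy) as [hvy _].
    assert (hZ : opn (sub E U) (fun z => W (proj1_sig z))) by (exists W; split; auto; tauto).
    pose proof (dg _ hZ (exist _ x hvx) (exist _ y hvy)) as D.
    simpl in D. rewrite (sgE x hvx), (sgE y hvy).
    assert (e1 : (fun x0 => exists h : U x0, W x0) = (fun x0 => U x0 /\ W x0)).
    { apply pe_ext; intros z; split; [intros [h1 h2]; auto|intros [h1 h2]; exists h1; auto]. }
    rewrite e1 in D.
    assert (e2 : (fun x0 => exists h : V x0, W (proj1_sig (g (exist _ x0 h)))) = (fun x0 => V x0 /\ W (sg x0))).
    { apply pe_ext; intros z; split.
      - intros [h1 h2]; rewrite (sgE z h1); auto.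
      - intros [h1 h2]; exists h1; rewrite <- (sgE z h1); auto. }
    rewrite e2 in D.
    apply (circ_mono E HE (fun x0 => U x0 /\ W x0)); auto; [apply opn_inter; auto| tauto |].
    apply D. apply (circ_mono B HB O); auto.
  - intros W hW hWU e1 e2 h.
    destruct (circ_dom E HE W e1 e2 hW h) as [h1 h2].
    assert (hZ : opn (sub B V) (fun y => W (sg (proj1_sig y)))).
    { destruct (cg (fun z => W (proj1_sig z))) as [W0 [hW0 eW0]].
      { exists W; split; auto. tauto. }
      exists W0; split; auto. intros [y hy]; simpl. rewrite (sgE y hy). apply (eW0 (exist _ y hy)). }
    pose proof (dphi _ hZ (exist _ e1 (hWU e1 h1)) (exist _ e2 (hWU e2 h2))) as D.
    simpl in D. rewrite !hphi in D. simpl in D.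
    assert (e3 : (fun x0 => exists h : V x0, W (sg x0)) = (fun x0 => V x0 /\ W (sg x0))).
    { apply pe_ext; intros z; split; [intros [a c]; auto|intros [a c]; exists a; auto]. }
    rewrite e3 in D. apply D.
    assert (e4 : (fun x0 => exists h : U x0, W (sg (proj1_sig (phi (exist _ x0 h))))) = W).
    { apply pe_ext; intros z; split.
      - intros [hz hw]. rewrite hphi in hw. simpl in hw. rewrite (proj2 (S2 z hz)) in hw. exact hw.
      - intros hw. exists (hWU z hw). rewrite hphi. simpl. rewrite (proj2 (S2 z (hWU z hw))). exact hw. }
    rewrite e4. exact h.
Qed.

Lemma local (b : pt B) : exists V, opn B V /\ V b /\ exists F : (pt E -> Prop) -> Prop,
  (forall U, F U -> opn E U) /\ (forall e, V (rho e) -> exists U, F U /\ U e) /\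
  (forall U1 U2, F U1 -> F U2 -> forall e, U1 e -> U2 e -> forall e', U1 e' <-> U2 e') /\
  (forall U, F U -> exists sg, SheetProps V U sg).
Proof.
  destruct cov as [_ [_ hc]]. destruct (hc b) as [V [hV [hb [F [hF [hFV [hdis hiso]]]]]]].
  exists V; split; auto; split; auto. exists F. split; auto. split; [|split; auto].
  - intros e he. apply hFV in he. destruct he as [U [h1 h2]]. exists U; auto.
  - intros U hU. destruct (hiso U hU) as [phi [hp hi]]. eapply sheet_sigma; eauto.
Qed.

Lemma sig_cont V U sg (gm : I -> pt B) t : opn B V -> SheetProps V U sg ->
  cont_at B gm t -> V (gm t) -> cont_at E (fun u => sg (gm u)) t.
Proof.
  intros hV [_ [_ [S3 _]]] hg hvt W hW hWt.
  destruct (hg _ (S3 W hW) (conj hvt hWt)) as [eps [he H]]. exists eps; split; auto.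
  intros u hu. apply (H u hu).
Qed.

Lemma sig_cont2 V U sg (H : I * I -> pt B) p : opn B V -> SheetProps V U sg ->
  cont2 B H p -> V (H p) -> cont2 E (fun q => sg (H q)) p.
Proof.
  intros hV [_ [_ [S3 _]]] hg hvt W hW hWt.
  destruct (hg _ (S3 W hW) (conj hvt hWt)) as [eps [he H']]. exists eps; split; auto.
  intros u h1 h2. apply (H' u h1 h2).
Qed.

End Cov.

Section Cov.
Variables (E B : PreStream) (rho : pt E -> pt B).
Hypotheses (HE : is_stream E) (HB : is_stream B) (cov : stream_covering E B rho).

Lemma uniq_I (f f' : I -> pt E) : (forall t, cont_at E f t) -> (forall t, cont_at E f' t) ->
  (forall t, rho (f t) = rho (f' t)) -> f I0 = f' I0 -> forall t, f t = f' t.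
Proof.
  intros cf cf' hr h0 t.
  apply (conn_I 0 1 (fun t => f t = f' t)); try lra.
  - intros t0 ht0. replace t0 with I0; auto. apply I_eq; simpl; auto.
  - intros u _ hu. destruct (local E B rho HE HB cov (rho (f u))) as [V [hV [hb [F [hF [hcov [hdis hsig]]]]]]].
    destruct (hcov (f u) hb) as [U [hFU hUu]]. destruct (hsig U hFU) as [sg [S1 [S2 _]]].
    destruct (cf u U (hF U hFU) hUu) as [e1 [he1 H1]].
    rewrite hu in hUu. destruct (cf' u U (hF U hFU) hUu) as [e2 [he2 H2]].
    exists (Rmin e1 e2); split; [apply Rmin_glb_lt; lra|]. intros v _ hv.
    pose proof (Rmin_l e1 e2); pose proof (Rmin_r e1 e2).
    rewrite <- (proj2 (S2 (f v) (H1 v ltac:(lra)))), <- (proj2 (S2 (f' v) (H2 v ltac:(lra)))), hr. reflexivity.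
  - intros u _ hu. destruct (local E B rho HE HB cov (rho (f u))) as [V [hV [hb [F [hF [hcov [hdis hsig]]]]]]].
    destruct (hcov (f u) hb) as [U1 [hF1 hU1]].
    assert (hb' : V (rho (f' u))) by (rewrite <- hr; auto).
    destruct (hcov (f' u) hb') as [U2 [hF2 hU2]].
    assert (dj : forall z, ~ (U1 z /\ U2 z)).
    { intros z [z1 z2]. apply hu. pose proof (proj2 (hdis U1 U2 hF1 hF2 z z1 z2 (f' u)) hU2) as h'.
      destruct (hsig U1 hF1) as [sg [S1 [S2 _]]].
      rewrite <- (proj2 (S2 _ hU1)), <- (proj2 (S2 _ h')), hr. reflexivity. }
    destruct (cf u U1 (hF U1 hF1) hU1) as [e1 [he1 H1]].
    destruct (cf' u U2 (hF U2 hF2) hU2) as [e2 [he2 H2]].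
    exists (Rmin e1 e2); split; [apply Rmin_glb_lt; lra|]. intros v _ hv heq.
    pose proof (Rmin_l e1 e2); pose proof (Rmin_r e1 e2).
    apply (dj (f v)). split; [apply H1; lra|]. rewrite heq. apply H2; lra.
  - apply I_bnd.
Qed.

Lemma stay V (F : (pt E -> Prop) -> Prop) U (f : I -> pt E) x z :
  (forall U, F U -> opn E U) -> (forall e, V (rho e) -> exists U, F U /\ U e) ->
  (forall U1 U2, F U1 -> F U2 -> forall e, U1 e -> U2 e -> forall e', U1 e' <-> U2 e') ->
  F U -> (forall t, cont_at E f t) -> 0 <= x <= z -> z <= 1 ->
  (forall t, x <= proj1_sig t <= z -> V (rho (f t))) ->
  U (f (mkI x)) -> forall t, x <= proj1_sig t <= z -> U (f t).
Proof.
  intros hF hcov hdis hFU cf hx hz hV hU0.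
  apply (conn_I x z (fun t => U (f t))); auto.
  - intros t ht. replace t with (mkI x); auto. apply I_eq; rewrite mkI_val; lra.
  - intros u _ hu. destruct (cf u U (hF U hFU) hu) as [e1 [he1 H1]]. exists e1; split; auto.
  - intros u hu nu. destruct (hcov (f u) (hV u hu)) as [U' [hF' hU']].
    destruct (cf u U' (hF U' hF') hU') as [e1 [he1 H1]]. exists e1; split; auto.
    intros v _ hv hUv. apply nu. apply (proj1 (hdis U' U hF' hFU (f v) (H1 v hv) hUv (f u))). exact hU'.
Qed.

Lemma path_lift (gm : I -> pt B) (e : pt E) : (forall t, cont_at B gm t) -> rho e = gm I0 ->
  exists f, (forall t, cont_at E f t) /\ f I0 = e /\ forall t, rho (f t) = gm t.
Proof.
  intros cg he.
  set (P := fun r => exists f, (forall t, cont_at E f t) /\ f I0 = e /\ forall t, proj1_sig t <= r -> rho (f t) = gm t).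
  assert (mono : forall r r', r' <= r -> P r -> P r').
  { intros r r' hr [f [h1 [h2 h3]]]. exists f; split; auto; split; auto. intros t ht; apply h3; lra. }
  assert (ext : forall u : I, exists eta, eta > 0 /\ forall x y, 0 <= x <= y -> y <= 1 ->
      Rabs (x - proj1_sig u) < eta -> Rabs (y - proj1_sig u) < eta -> P x -> P y).
  { intros u. destruct (local E B rho HE HB cov (gm u)) as [V [hV [hb [F [hF [hcov [hdis hsig]]]]]]].
    destruct (cg u V hV hb) as [eta [heta Heta]]. exists eta; split; auto.
    intros x y hxy hy hx hy' [f [cf [f0 fl]]].
    set (tx := mkI x).
    assert (htx : proj1_sig tx = x) by (apply mkI_val; lra).
    assert (lx : rho (f tx) = gm tx) by (apply fl; lra).
    assert (vx : V (rho (f tx))) by (rewrite lx; apply Heta; rewrite htx; auto).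
    destruct (hcov _ vx) as [U [hFU hU]]. destruct (hsig U hFU) as [sg SP].
    pose proof SP as [S1 [S2 _]].
    set (h := fun t : I => sg (gm (mkI (clamp x y (proj1_sig t))))).
    assert (inV : forall t : I, V (gm (mkI (clamp x y (proj1_sig t))))).
    { intros t. apply Heta. pose proof (clamp_bnd x y (proj1_sig t) ltac:(lra)). rewrite mkI_val by lra.
      apply Rabs_def2 in hx; apply Rabs_def2 in hy'. apply Rabs_def1; lra. }
    exists (pw x f h). split; [|split].
    - intros t. apply pw_cont; auto.
      + intros _. apply (sig_cont E B rho V U sg (fun t => gm (mkI (clamp x y (proj1_sig t))))); auto.
        apply (comp_II B gm (fun t => mkI (clamp x y (proj1_sig t))) 1); [lra| |apply cg].
        intros u'. eapply Rle_trans; [apply mkI_lip|]. rewrite Rmult_1_l. apply clamp_lip; lra.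
      + intros ht. replace t with tx by (apply I_eq; lra). unfold h.
        rewrite htx, clamp_id by lra. fold tx.
        rewrite <- lx. symmetry; apply S2; auto.
    - unfold pw; simpl. destruct Rle_dec; [auto|lra].
    - intros t ht. unfold pw. destruct Rle_dec; [apply fl; auto|].
      unfold h. rewrite clamp_id by lra. rewrite mkI_proj. apply S1.
      specialize (inV t). rewrite clamp_id in inV by lra. rewrite mkI_proj in inV. auto. }
  assert (P1 : P 1).
  { apply (conn 0 1 P); try lra.
    - exists (fun _ => e). split; [intros; apply const_cont|split; auto].
      intros t ht. replace t with I0; auto. apply I_eq; pose proof (I_bnd t); simpl; lra.
    - intros u hu Pu. destruct (ext (mkI u)) as [eta [heta Heta]]. exists eta; split; auto.
      intros v hv hvu. destruct (Rle_dec v u); [apply (mono u); auto|].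
      apply (Heta u v); [lra|lra| | |exact Pu]; rewrite mkI_val by lra; [rewrite Rminus_diag, Rabs_R0; lra| exact hvu].
    - intros u hu Pu. destruct (ext (mkI u)) as [eta [heta Heta]]. exists eta; split; auto.
      intros v hv hvu Pv. apply Pu. destruct (Rle_dec u v); [apply (mono v); auto|].
      apply (Heta v u); [lra|lra| | |exact Pv]; rewrite mkI_val by lra; [exact hvu|rewrite Rminus_diag, Rabs_R0; lra]. }
  destruct P1 as [f [h1 [h2 h3]]]. exists f; split; auto; split; auto.
  intros t; apply h3. apply I_bnd.
Qed.

End Cov.

Section Cov.
Variables (E B : PreStream) (rho : pt E -> pt B).
Hypotheses (HE : is_stream E) (HB : is_stream B) (cov : stream_covering E B rho).

Lemma joint_cont (H : I * I -> pt B) (L0 : I -> pt E) (fs : I -> I -> pt E) :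
  (forall p, cont2 B H p) -> (forall s, cont_at E L0 s) -> (forall s t, cont_at E (fs s) t) ->
  (forall s, fs s I0 = L0 s) -> (forall s t, rho (fs s t) = H (s, t)) ->
  forall p, cont2 E (fun p => fs (fst p) (snd p)) p.
Proof.
  intros cH cL cfs f0 fl [s0 t0].
  set (Ht := fun p : I * I => fs (fst p) (snd p)).
  set (Q := fun r => exists d, d > 0 /\ forall s t : I, Rabs (proj1_sig s - proj1_sig s0) < d ->
                proj1_sig t <= r -> cont2 E Ht (s, t)).
  assert (mono : forall r r', r' <= r -> Q r -> Q r').
  { intros r r' hr [d [hd h]]. exists d; split; auto. intros s t h1 h2; apply h; auto; lra. }
  assert (ext : forall u : I, exists eta, eta > 0 /\ forall x y, 0 <= x <= y -> y <= 1 ->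
      Rabs (x - proj1_sig u) < eta -> Rabs (y - proj1_sig u) < eta -> (x = 0 \/ Q x) -> Q y).
  { intros u. destruct (local E B rho HE HB cov (H (s0, u))) as [V [hV [hb [F [hF [hcov [hdis hsig]]]]]]].
    destruct (cH (s0, u) V hV hb) as [eta0 [heta0 Heta0]]. simpl in Heta0.
    exists (eta0 / 2); split; [lra|].
    intros x y hxy hy hx hy' hxQ.
    set (tx := mkI x).
    assert (htx : proj1_sig tx = x) by (apply mkI_val; lra).
    assert (vx : V (rho (fs s0 tx))).
    { rewrite fl. apply Heta0; cbn [fst snd]; [rewrite Rminus_diag, Rabs_R0; lra|]. rewrite htx. apply Rabs_def2 in hx. apply Rabs_def1; lra. }
    destruct (hcov _ vx) as [U [hFU hU]]. destruct (hsig U hFU) as [sg SP].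
    pose proof SP as [S1 [S2 _]].
    assert (D2 : exists d2, d2 > 0 /\ (forall s, Rabs (proj1_sig s - proj1_sig s0) < d2 -> U (fs s tx)) /\
                 (x > 0 -> forall s t : I, Rabs (proj1_sig s - proj1_sig s0) < d2 -> proj1_sig t <= x -> cont2 E Ht (s, t))).
    { destruct hxQ as [x0|[d1 [hd1 Hd1]]].
      - assert (etx : tx = I0) by (apply I_eq; rewrite htx; simpl; auto).
        rewrite etx, f0 in hU. destruct (cL s0 U (hF U hFU) hU) as [eps [he Heps]].
        exists eps; split; auto; split; [|intros; lra]. intros s hs. rewrite etx, f0. apply Heps; auto.
      - assert (c0 : cont2 E Ht (s0, tx)) by (apply Hd1; [rewrite Rminus_diag, Rabs_R0; lra| lra]).
        destruct (c0 U (hF U hFU) hU) as [eps [he Heps]].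
        exists (Rmin eps d1); split; [apply Rmin_glb_lt; lra|]. split.
        + intros s hs. apply (Heps (s, tx)); cbn [fst snd]; [pose proof (Rmin_l eps d1); lra|rewrite Rminus_diag, Rabs_R0; lra].
        + intros _ s t hs ht. apply Hd1; auto. pose proof (Rmin_r eps d1); lra. }
    destruct D2 as [d2 [hd2 [D2a D2b]]].
    set (z := Rmin 1 (proj1_sig u + eta0 / 2)).
    assert (hz1 : z <= 1) by apply Rmin_l.
    assert (hz2 : z <= proj1_sig u + eta0/2) by apply Rmin_r.
    assert (hxz : x <= z). { unfold z. apply Rmin_glb; [lra|]. apply Rabs_def2 in hx. lra. }
    assert (hyz : y <= z). { unfold z. apply Rmin_glb; [lra|]. apply Rabs_def2 in hy'. lra. }
    set (d3 := Rmin d2 eta0).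
    assert (hd3 : d3 > 0) by (apply Rmin_glb_lt; lra).
    assert (reg : forall s t : I, Rabs (proj1_sig s - proj1_sig s0) < d3 -> x <= proj1_sig t <= z ->
                 Ht (s, t) = sg (H (s, t))).
    { intros s t hs ht. unfold Ht; simpl.
      assert (inU : U (fs s t)).
      { apply (stay E B rho V F U (fs s) x z hF hcov hdis hFU (cfs s)); auto; try lra.
        - intros t' ht'. rewrite fl. apply Heta0; cbn [fst snd]; [assert (d3 <= eta0) by apply Rmin_r; lra|].
          apply Rabs_def2 in hx. apply Rabs_def1; lra.
        - apply D2a. assert (d3 <= d2) by apply Rmin_l; lra. }
      rewrite <- fl. symmetry. apply S2. auto. }
    exists (d3 / 2); split; [lra|]. intros s t hs ht.
    destruct (Rle_dec (proj1_sig t) x) as [htx'|htx']; [destruct (Rlt_dec 0 x) as [x0|x0]|].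
    1: { apply D2b; auto. assert (d3 <= d2) by apply Rmin_l; lra. }
    all: assert (hxt : x <= proj1_sig t /\ (x < proj1_sig t \/ x = 0)) by (pose proof (I_bnd t); lra).
    all: assert (M : exists m, m > 0 /\ forall r, 0 <= r <= 1 -> Rabs (r - proj1_sig t) < m -> x <= r <= z).
    all: try (destruct hxt as [hxt1 [hxt2|hxt2]];
      [exists (Rmin (proj1_sig t - x) (proj1_sig u + eta0/2 - proj1_sig t)); split;
        [apply Rmin_glb_lt; apply Rabs_def2 in hy'; lra|];
       intros r hr hrt; pose proof (Rmin_l (proj1_sig t - x) (proj1_sig u + eta0/2 - proj1_sig t));
       pose proof (Rmin_r (proj1_sig t - x) (proj1_sig u + eta0/2 - proj1_sig t)); apply Rabs_def2 in hrt;
       split; [lra|unfold z; apply Rmin_glb; lra]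
      |exists (proj1_sig u + eta0/2 - proj1_sig t); split; [apply Rabs_def2 in hy'; lra|];
       intros r hr hrt; apply Rabs_def2 in hrt; split; [lra|unfold z; apply Rmin_glb; lra]]).
    all: destruct M as [m [hm Hm]].
    all: intros W hW hWt.
    all: assert (vst : V (H (s, t))) by (apply Heta0; cbn [fst snd]; [assert (d3 <= eta0) by apply Rmin_r; lra|];
                 apply Rabs_def2 in hx; apply Rabs_def1; lra).
    all: rewrite (reg s t ltac:(lra) ltac:(lra)) in hWt.
    all: destruct (sig_cont2 E B rho V U sg H (s, t) hV SP (cH (s, t)) vst W hW hWt) as [e1 [he1 He1]].
    all: exists (Rmin e1 (Rmin m (d3/2))); split; [apply Rmin_glb_lt; [lra|apply Rmin_glb_lt; lra]|].
    all: intros [s' t'] hs' ht'; simpl in hs', ht'.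
    all: pose proof (Rmin_l e1 (Rmin m (d3/2))); pose proof (Rmin_r e1 (Rmin m (d3/2)));
         pose proof (Rmin_l m (d3/2)); pose proof (Rmin_r m (d3/2)).
    all: rewrite (reg s' t'); [apply He1; simpl; lra| |apply Hm; [apply I_bnd|lra]].
    all: apply Rabs_def2 in hs; apply Rabs_def2 in hs'; apply Rabs_def1; lra. }
  assert (Q1 : Q 1).
  { apply (conn 0 1 Q); try lra.
    - destruct (ext I0) as [eta [heta Heta]]. apply (Heta 0 0); simpl; try lra; auto.
      rewrite Rminus_diag, Rabs_R0; lra. rewrite Rminus_diag, Rabs_R0; lra.
    - intros u hu Pu. destruct (ext (mkI u)) as [eta [heta Heta]]. exists eta; split; auto.
      intros v hv hvu. destruct (Rle_dec v u); [apply (mono u); auto|].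
      apply (Heta u v); [lra|lra| | |right; exact Pu]; rewrite mkI_val by lra; [rewrite Rminus_diag, Rabs_R0; lra| exact hvu].
    - intros u hu Pu. destruct (ext (mkI u)) as [eta [heta Heta]]. exists eta; split; auto.
      intros v hv hvu Pv. apply Pu. destruct (Rle_dec u v); [apply (mono v); auto|].
      apply (Heta v u); [lra|lra| | |right; exact Pv]; rewrite mkI_val by lra; [exact hvu|rewrite Rminus_diag, Rabs_R0; lra]. }
  destruct Q1 as [d [hd Hd]]. apply Hd; [rewrite Rminus_diag, Rabs_R0; lra|]. apply I_bnd.
Qed.

End Cov.

Section Cov.
Variables (E B : PreStream) (rho : pt E -> pt B).
Hypotheses (HE : is_stream E) (HB : is_stream B) (cov : stream_covering E B rho).

Lemma sq_lift (H : I * I -> pt B) (e : pt E) : (forall p, cont2 B H p) -> rho e = H (I0, I0) ->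
  exists Ht, (forall p, cont2 E Ht p) /\ (forall p, rho (Ht p) = H p) /\ Ht (I0, I0) = e.
Proof.
  intros cH he.
  assert (cb : forall s, cont_at B (fun s => H (s, I0)) s).
  { intros s. apply (comp_Isq B H (fun s => (s, I0)) 1 s); [lra| |simpl|apply cH].
    - intros; simpl; lra.
    - intros; rewrite Rminus_diag, Rabs_R0; pose proof (Rabs_pos (proj1_sig u' - proj1_sig s)); lra. }
  destruct (path_lift E B rho HE HB cov (fun s => H (s, I0)) e cb he) as [L0 [cL0 [L00 lL0]]].
  assert (ex : forall s, {f : I -> pt E | (forall t, cont_at E f t) /\ f I0 = L0 s /\ forall t, rho (f t) = H (s, t)}).
  { intros s. apply constructive_indefinite_description.
    apply (path_lift E B rho HE HB cov (fun t => H (s, t)) (L0 s)).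
    - intros t. apply slice_cont. apply cH.
    - apply lL0. }
  set (fs := fun s => proj1_sig (ex s)).
  exists (fun p => fs (fst p) (snd p)). split; [|split].
  - apply (joint_cont E B rho HE HB cov H L0 fs cH cL0).
    + intros s t. exact (proj1 (proj2_sig (ex s)) t).
    + intros s. exact (proj1 (proj2 (proj2_sig (ex s)))).
    + intros s t. exact (proj2 (proj2 (proj2_sig (ex s))) t).
  - intros [s t]. exact (proj2 (proj2 (proj2_sig (ex s))) t).
  - simpl. unfold fs. rewrite (proj1 (proj2 (proj2_sig (ex I0)))). exact L00.
Qed.

Definition seg (p0 p : I * I) (u : I) : I * I :=
  (mkI (proj1_sig (fst p0) + proj1_sig u * (proj1_sig (fst p) - proj1_sig (fst p0))),
   mkI (proj1_sig (snd p0) + proj1_sig u * (proj1_sig (snd p) - proj1_sig (snd p0)))).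

Lemma seg_lip (a b : I) (u u' : I) :
  Rabs (proj1_sig (mkI (proj1_sig a + proj1_sig u' * (proj1_sig b - proj1_sig a))) -
        proj1_sig (mkI (proj1_sig a + proj1_sig u * (proj1_sig b - proj1_sig a)))) <=
  1 * Rabs (proj1_sig u' - proj1_sig u).
Proof.
  eapply Rle_trans; [apply mkI_lip|].
  replace (proj1_sig a + proj1_sig u' * (proj1_sig b - proj1_sig a) - (proj1_sig a + proj1_sig u * (proj1_sig b - proj1_sig a)))
    with ((proj1_sig u' - proj1_sig u) * (proj1_sig b - proj1_sig a)) by ring.
  rewrite Rabs_mult. rewrite Rmult_1_l. rewrite <- (Rmult_1_r (Rabs (proj1_sig u' - proj1_sig u))) at 2.
  apply Rmult_le_compat_l; [apply Rabs_pos|]. pose proof (I_bnd a); pose proof (I_bnd b).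
  apply Rabs_le; lra.
Qed.

Lemma sq_uniq (Ht Ht' : I * I -> pt E) p0 : (forall p, cont2 E Ht p) -> (forall p, cont2 E Ht' p) ->
  (forall p, rho (Ht p) = rho (Ht' p)) -> Ht p0 = Ht' p0 -> forall p, Ht p = Ht' p.
Proof.
  intros c c' hr h0 p.
  assert (cs : forall G, (forall p, cont2 E G p) -> forall u, cont_at E (fun u => G (seg p0 p u)) u).
  { intros G cG u. apply (comp_Isq E G (seg p0 p) 1 u); [lra| | |apply cG]; intros; unfold seg; simpl fst; simpl snd; apply seg_lip. }
  assert (mkI_eq : forall r t, r = proj1_sig t -> mkI r = t) by (intros r t ->; apply mkI_proj).
  assert (e0 : seg p0 p I0 = p0).
  { destruct p0 as [a b]. unfold seg; simpl fst; simpl snd. f_equal; apply mkI_eq; simpl; ring. }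
  assert (e1 : seg p0 p I1 = p).
  { destruct p0 as [a b], p as [c0 d]. unfold seg; simpl fst; simpl snd. f_equal; apply mkI_eq; simpl; ring. }
  pose proof (uniq_I E B rho HE HB cov (fun u => Ht (seg p0 p u)) (fun u => Ht' (seg p0 p u)) (cs Ht c) (cs Ht' c')
    (fun u => hr _) ltac:(simpl; rewrite e0; auto) I1) as h. simpl in h. rewrite e1 in h. exact h.
Qed.

Lemma lift_local (f : I -> pt E) W u : (forall t, cont_at E f t) -> dipath B (fun t => rho (f t)) ->
  opn E W -> W (f u) -> exists eps, eps > 0 /\ forall v1 v2 : I,
    Rabs (proj1_sig v1 - proj1_sig u) < eps -> Rabs (proj1_sig v2 - proj1_sig u) < eps ->
    proj1_sig v1 <= proj1_sig v2 -> circ E W (f v1) (f v2).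
Proof.
  intros cf [_ df] hW hWu.
  destruct (local E B rho HE HB cov (rho (f u))) as [V [hV [hb [F [hF [hcov [hdis hsig]]]]]]].
  destruct (hcov _ hb) as [U [hFU hU]]. destruct (hsig U hFU) as [sg SP].
  pose proof SP as [S1 [S2 [S3 [S4 _]]]].
  destruct (cf u (fun x => U x /\ W x) (opn_inter E HE U W (hF U hFU) hW) (conj hU hWu)) as [eps [he He]].
  exists eps; split; auto. intros v1 v2 h1 h2 h12.
  assert (hO := S3 W hW).
  assert (inO : forall t : I, proj1_sig v1 <= proj1_sig t <= proj1_sig v2 -> V (rho (f t)) /\ W (sg (rho (f t)))).
  { intros t ht. destruct (He t) as [hut hwt].
    { apply Rabs_def2 in h1; apply Rabs_def2 in h2; apply Rabs_def1; lra. }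
    split; [apply S2; auto|]. rewrite (proj2 (S2 _ hut)). auto. }
  pose proof (S4 W (fun x => V x /\ W (sg x)) hW hO (fun x h => h) (rho (f v1)) (rho (f v2))) as D.
  rewrite (proj2 (S2 (f v1) (proj1 (He v1 h1)))), (proj2 (S2 (f v2) (proj1 (He v2 h2)))) in D.
  apply D. apply (df _ hO). split; auto.
Qed.

Lemma lift_dipath (f : I -> pt E) : (forall t, cont_at E f t) -> dipath B (fun t => rho (f t)) -> dipath E f.
Proof.
  intros cf df. split; [apply cont_iff; auto|].
  intros W hW t1 t2 [h12 hin]. cbn beta in hin.
  set (P := fun t : I => forall w : I, proj1_sig t1 <= proj1_sig w <= proj1_sig t -> circ E W (f t1) (f w)).
  assert (Pt2 : P t2).
  { apply (conn_I (proj1_sig t1) (proj1_sig t2) P); [pose proof (I_bnd t1); lra|apply I_bnd| | | |lra].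
    - intros t ht w hw. replace w with t1 by (apply I_eq; lra). apply circ_refl; auto. apply hin; lra.
    - intros u hu Pu. destruct (lift_local f W u cf df hW (hin u hu)) as [eps [he He]].
      exists eps; split; auto. intros v hv hvu w hw.
      destruct (Rle_dec (proj1_sig w) (proj1_sig u)); [apply Pu; lra|].
      apply circ_trans with (f u); auto; [apply Pu; lra|]. apply He; try lra.
      + rewrite Rminus_diag, Rabs_R0; lra.
      + apply Rabs_def2 in hvu; apply Rabs_def1; lra.
    - intros u hu Pu. destruct (lift_local f W u cf df hW (hin u hu)) as [eps [he He]].
      exists eps; split; auto. intros v hv hvu Pv. apply Pu. intros w hw.
      destruct (Rle_dec (proj1_sig w) (proj1_sig v)); [apply Pv; lra|].
      destruct (Rle_dec (proj1_sig u) (proj1_sig v)); [apply Pv; lra|].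
      apply circ_trans with (f v); auto; [apply Pv; lra|]. apply He; try lra; auto.
      apply Rabs_def2 in hvu; apply Rabs_def1; lra. }
  apply Pt2. lra.
Qed.

End Cov.

Definition dreach (X : PreStream) (V : pt X -> Prop) (x y : pt X) : Prop :=
  exists g : I -> pt X, dipath X g /\ g I0 = x /\ g I1 = y /\ forall t, V (g t).

Lemma dreach_pre X V : is_stream X -> preorder_on V (dreach X V).
Proof.
  intros HX. split; [|split].
  - intros x y [g [_ [<- [<- h]]]]. auto.
  - intros x hx. exists (fun _ => x). split; [apply const_dipath; auto|auto].
  - intros x y z [g1 [d1 [a1 [b1 i1]]]] [g2 [d2 [a2 [b2 i2]]]].
    exists (concat g1 g2). split; [apply concat_dipath; auto; congruence|].
    rewrite concat_0, concat_1. split; auto; split; auto. apply concat_in; auto.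
Qed.

Definition reflI (t : I) : I := mkI (1 - proj1_sig t).

Lemma reflI_val t : proj1_sig (reflI t) = 1 - proj1_sig t.
Proof. unfold reflI. apply mkI_val. pose proof (I_bnd t); lra. Qed.

Lemma reflI_inv t : reflI (reflI t) = t.
Proof. apply I_eq. rewrite !reflI_val. ring. Qed.

Lemma reflI_0 : reflI I0 = I1.
Proof. apply I_eq. rewrite reflI_val. simpl. ring. Qed.

Lemma reflI_lip t t' : Rabs (proj1_sig (reflI t') - proj1_sig (reflI t)) = Rabs (proj1_sig t' - proj1_sig t).
Proof. rewrite !reflI_val. replace (1 - proj1_sig t' - (1 - proj1_sig t)) with (- (proj1_sig t' - proj1_sig t)) by ring. apply Rabs_Ropp. Qed.

Lemma refl_cont X (G : I * I -> pt X) : (forall p, cont2 X G p) -> forall p, cont2 X (fun p => G (fst p, reflI (snd p))) p.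
Proof.
  intros c p. apply (comp_sqsq X G (fun p => (fst p, reflI (snd p)))); [|apply c].
  intros q eps h1 h2. cbn [fst snd]. rewrite reflI_lip. auto.
Qed.

Section Cov.
Variables (E B : PreStream) (rho : pt E -> pt B).
Hypotheses (HE : is_stream E) (HB : is_stream B) (cov : stream_covering E B rho).

Lemma rho_map : stream_map E B rho.
Proof. exact (proj1 cov). Qed.

Lemma PO_E_B : path_ordered E -> path_ordered B.
Proof.
  intros PE V hV x y hxy.
  apply (circ_gen B HB V (dreach B V) hV (dreach_pre B V HB)); auto.
  intros b hbV. destruct (local E B rho HE HB cov b) as [Vb [hVb [hb [F [hF [hcov [hdis hsig]]]]]]].
  destruct (proj1 (proj2 cov) b) as [e he].
  destruct (hcov e ltac:(rewrite he; auto)) as [U [hFU hU]]. destruct (hsig U hFU) as [sg [S1 [S2 [S3 [S4 S5]]]]].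
  exists (fun y => V y /\ Vb y). split; [apply opn_inter; auto|]. split; [auto|]. split; [tauto|].
  intros a c hac.
  assert (hW : opn E (fun e => U e /\ V (rho e))).
  { apply opn_inter; auto. apply (proj1 rho_map). auto. }
  assert (D : circ E (fun e => U e /\ V (rho e)) (sg a) (sg c)).
  { apply (S4 _ (fun y => V y /\ Vb y)); auto; [apply opn_inter; auto|].
    intros z [hz1 hz2]. destruct (S1 z hz2) as [h1 h2]. split; auto. split; auto. rewrite h2; auto. }
  destruct (circ_dom B HB (fun y => V y /\ Vb y) a c ltac:(apply opn_inter; auto) hac) as [[_ ha] [_ hc]].
  destruct (PE _ hW _ _ D) as [g [dg [g0 [g1 gi]]]].
  exists (fun t => rho (g t)). split; [apply (stream_map_comp vec_I E B g rho dg rho_map)|].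
  split; [rewrite g0; apply S1; auto|]. split; [rewrite g1; apply S1; auto|].
  intros t. apply gi.
Qed.

Lemma PO_B_E : path_ordered B -> path_ordered E.
Proof.
  intros PB V hV x y hxy.
  apply (circ_gen E HE V (dreach E V) hV (dreach_pre E V HE)); auto.
  intros e heV. destruct (local E B rho HE HB cov (rho e)) as [Vb [hVb [hb [F [hF [hcov [hdis hsig]]]]]]].
  destruct (hcov e hb) as [U [hFU hU]]. destruct (hsig U hFU) as [sg SP].
  pose proof SP as [S1 [S2 [S3 [S4 S5]]]].
  assert (hW : opn E (fun z => V z /\ U z)) by (apply opn_inter; auto).
  exists (fun z => V z /\ U z). split; auto. split; [auto|]. split; [tauto|].
  intros a c hac.
  destruct (circ_dom E HE _ a c hW hac) as [[_ ha] [_ hc]].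
  pose proof (S5 (fun z => V z /\ U z) hW ltac:(intros z [_ hz]; exact hz) a c hac) as D.
  destruct (PB _ (S3 _ hW) _ _ D) as [g [dg [g0 [g1 gi]]]].
  exists (fun t => sg (g t)). split; [|split; [rewrite g0; apply S2; auto|split; [rewrite g1; apply S2; auto|]]].
  - apply (lift_dipath E B rho HE HB cov).
    + intros t. apply (sig_cont E B rho Vb U sg g t hVb SP); [|apply gi].
      destruct dg as [cg _]. apply cont_iff. exact cg.
    + replace (fun t => rho (sg (g t))) with g; auto.
      apply functional_extensionality; intros t. symmetry. apply S1. apply gi.
  - intros t. apply gi.
Qed.

Lemma dihom_lift (H : I * I -> pt B) (Ht : I * I -> pt E) : dihomotopy B H ->
  (forall p, cont2 E Ht p) -> (forall p, rho (Ht p) = H p) -> dihomotopy E Ht.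
Proof.
  intros [cH dH] c l. split; [apply sqcont_iff; auto|].
  intros s. apply (lift_dipath E B rho HE HB cov).
  - intros t. apply slice_cont. apply c.
  - replace (fun t => rho (Ht (s, t))) with (fun t => H (s, t)); [apply dH|].
    apply functional_extensionality; intros t; symmetry; auto.
Qed.

End Cov.

Theorem mainTheorem12 (E B : PreStream) (rho : pt E -> pt B) :
  is_stream E -> is_stream B -> stream_covering E B rho ->
  (path_ordered E <-> path_ordered B) /\
  (forall e : pt E,
    (forall H : I * I -> pt B, dihomotopy B H -> H (I0, I0) = rho e ->
       exists Ht : I * I -> pt E,
         (dihomotopy E Ht /\ (forall p, rho (Ht p) = H p) /\ Ht (I0, I0) = e) /\
         forall Ht' : I * I -> pt E,
           dihomotopy E Ht' -> (forall p, rho (Ht' p) = H p) -> Ht' (I0, I0) = e ->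
           forall p, Ht' p = Ht p) /\
    (forall H : I * I -> pt B, dihomotopy B H -> H (I0, I1) = rho e ->
       exists Ht : I * I -> pt E,
         (dihomotopy E Ht /\ (forall p, rho (Ht p) = H p) /\ Ht (I0, I1) = e) /\
         forall Ht' : I * I -> pt E,
           dihomotopy E Ht' -> (forall p, rho (Ht' p) = H p) -> Ht' (I0, I1) = e ->
           forall p, Ht' p = Ht p)).
Proof.
  intros HE HB cov. split; [split; [apply (PO_E_B E B rho)|apply (PO_B_E E B rho)]; auto|].
  intros e. split.
  - intros H dH h0. pose proof dH as [cH0 _]. pose proof (proj1 (sqcont_iff B H) cH0) as cH.
    destruct (sq_lift E B rho HE HB cov H e cH (eq_sym h0)) as [Ht [c [l t0]]].
    exists Ht. split; [split; [apply (dihom_lift E B rho HE HB cov H); auto|auto]|].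
    intros Ht' [c0' _] l' t0' p. pose proof (proj1 (sqcont_iff E Ht') c0') as c'.
    apply (sq_uniq E B rho HE HB cov Ht' Ht (I0, I0) c' c); [intros q; rewrite l, l'; auto|congruence].
  - intros H dH h0. pose proof dH as [cH0 _]. pose proof (proj1 (sqcont_iff B H) cH0) as cH.
    set (K := fun p : I * I => H (fst p, reflI (snd p))).
    destruct (sq_lift E B rho HE HB cov K e (refl_cont B H cH)) as [Kt [c [l t0]]].
    { unfold K; simpl. rewrite reflI_0. auto. }
    set (Ht := fun p : I * I => Kt (fst p, reflI (snd p))).
    assert (c2 : forall p, cont2 E Ht p) by (apply refl_cont; auto).
    assert (l2 : forall p, rho (Ht p) = H p).
    { intros [s t]. unfold Ht; rewrite l. unfold K; simpl. rewrite reflI_inv. auto. }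
    exists Ht. split; [split; [apply (dihom_lift E B rho HE HB cov H); auto|split; auto]|].
    + unfold Ht; simpl. rewrite <- reflI_0, reflI_inv. auto.
    + intros Ht' [c0' _] l' t0' p. pose proof (proj1 (sqcont_iff E Ht') c0') as c'.
      apply (sq_uniq E B rho HE HB cov Ht' Ht (I0, I1) c' c2); [intros q; rewrite l2, l'; auto|].
      rewrite t0'. unfold Ht; simpl. rewrite <- reflI_0, reflI_inv. auto.
Qed.
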